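(* Let $c\in C(X_A,\mathbb Z)$ be such that $[c]\in H^A_+$ is an order unit of $(H^A,H^A_+)$ (e.g. $c=l-k$ for a suspension triplet $(l,k,b)$). Then for every $m\in\mathbb N$ there exists $n_m\in\mathbb N$ such that $c^{n_m}(x)\ge m$ for all $x\in X_A$.
   Context: Let $N>1$ and $A$ an irreducible $N\times N$ $\{0,1\}$-matrix which is not a permutation matrix. $X_A$ is the compact space of sequences $(x_n)_{n\in\mathbb N}$, $x_n\in\{1,\dots,N\}$, $A(x_n,x_{n+1})=1$, and $\sigma_A((x_n)_n)=(x_{n+1})_n$. $H^A$ is the quotient of $C(X_A,\mathbb Z)$ by $\{u-u\circ\sigma_A: u\in C(X_A,\mathbb Z)\}$, $[f]$ the class of $f$, $H^A_+=\{[f]: f\in C(X_A,\mathbb Z_+)\}$ ($\mathbb Z_+$ the nonnegative integers); $[f]\in H^A_+$ is an order unit if for every $[u]\in H^A$ there is $n\in\mathbb N$ with $n[f]-[u]\in H^A_+$. For $m\in\mathbb N$, $c^m(x)=\sum_{i=0}^{m-1}c(\sigma_A^i(x))$. A suspension triplet is $(l,k,b)$ with $l,k$ continuous nonnegative real-valued, $b$ continuous real-valued, $l-k$ integer-valued with order-unit class, and $l-b$, $k-b\circ\sigma_A$ $\mathbb Z_+$-valued. *)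

(* Defs.v *)
From mathcomp Require Import all_boot all_order all_algebra all_fingroup.
Set Implicit Arguments. Unset Strict Implicit. Unset Printing Implicit Defensive.
Import Order.TTheory GRing.Theory Num.Theory.
Local Open Scope ring_scope.

Fixpoint mxpow (N : nat) (A : 'M[int]_N) (n : nat) : 'M[int]_N :=
  match n with
  | 0 => 1%:M
  | n'.+1 => mxpow A n' *m A
  end.

Definition zero_one_mx (N : nat) (A : 'M[int]_N) : Prop :=
  forall i j, A i j = 0 \/ A i j = 1.

Definition irreducible_mx (N : nat) (A : 'M[int]_N) : Prop :=
  forall i j, exists n : nat, (0 < n)%N /\ 0 < mxpow A n i j.

Definition inXA (N : nat) (A : 'M[int]_N) (x : nat -> 'I_N) : Prop :=
  forall n, A (x n) (x n.+1) = 1.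

Definition shift (N : nat) (x : nat -> 'I_N) : nat -> 'I_N := fun n => x n.+1.

(* Continuity of f : X_A -> Z (product topology on X_A, discrete topology on Z):
   f is locally constant, i.e. near each point it depends only on finitely many
   coordinates.  Values of f outside X_A are irrelevant. *)
Definition contXA (N : nat) (A : 'M[int]_N) (f : (nat -> 'I_N) -> int) : Prop :=
  forall x, inXA A x -> exists k : nat, forall y, inXA A y ->
    (forall i, (i < k)%N -> y i = x i) -> f y = f x.

Definition cohom (N : nat) (A : 'M[int]_N) (f g : (nat -> 'I_N) -> int) : Prop :=
  exists u, contXA A u /\ forall x, inXA A x -> f x - g x = u x - u (shift x).

Definition in_HApos (N : nat) (A : 'M[int]_N) (f : (nat -> 'I_N) -> int) : Prop :=
  exists g, contXA A g /\ (forall x, inXA A x -> 0 <= g x) /\ cohom A f g.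

Definition order_unit (N : nat) (A : 'M[int]_N) (f : (nat -> 'I_N) -> int) : Prop :=
  in_HApos A f /\
  forall u, contXA A u -> exists n : nat,
    in_HApos A (fun x => f x *+ n - u x).

(* Birkhoff sum c^m(x) = sum_{i<m} c(sigma^i x). *)
Definition bsum (N : nat) (c : (nat -> 'I_N) -> int) (m : nat) (x : nat -> 'I_N) : int :=
  \sum_(i < m) c (iter i (@shift N) x).

(* Main.v *)
Require Import Defs.
From mathcomp Require Import all_boot all_order all_algebra all_fingroup.
From mathcomp Require Import zify.
From Stdlib Require Import Classical ClassicalEpsilon.
Import Order.TTheory GRing.Theory Num.Theory.
Set Implicit Arguments. Unset Strict Implicit.
Local Open Scope ring_scope.


Definition P (N : nat) (A : 'M[int]_N) (u : (nat -> 'I_N) -> int) (k : nat) (w : nat -> 'I_N) : Prop :=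
  forall B : int, exists y, inXA A y /\ (forall i, (i < k)%N -> y i = w i) /\ B < u y.

Definition setw (N : nat) (w : nat -> 'I_N) (k : nat) (a : 'I_N) : nat -> 'I_N :=
  fun i => if i == k then a else w i.

Lemma Pstep (N : nat) (A : 'M[int]_N) (u : (nat -> 'I_N) -> int) k w : P A u k w -> exists a, P A u k.+1 (setw w k a).
Proof.
move=> Pw; apply: NNPP => Hn.
have H : forall a : 'I_N, exists B : int, forall y, inXA A y ->
   (forall i, (i < k.+1)%N -> y i = setw w k a i) -> u y <= B.
  move=> a; apply: NNPP => Ha; apply: Hn; exists a => B.
  apply: NNPP => HB; apply: Ha; exists B => y Hy Hc.
  rewrite leNgt; apply/negP => Hl; apply: HB; by exists y.
have [f Hf] := fin_all_exists H.
have [y [Hy [Hc Hl]]] := Pw (\sum_(a < N) `|f a|).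
have := Hf (y k) y Hy.
have Hyc : forall i, (i < k.+1)%N -> y i = setw w k (y k) i.
  move=> i; rewrite ltnS leq_eqVlt => /orP [/eqP ->|Hi]; rewrite /setw.
    by rewrite eqxx.
  by rewrite (ltn_eqF Hi) Hc.
move=> /(_ Hyc) Hle.
have : f (y k) <= \sum_(a < N) `|f a|.
  apply: le_trans (ler_norm _) _.
  by rewrite (bigD1 (y k)) //= lerDl sumr_ge0.
move=> Hf2.
have := lt_le_trans Hl (le_trans Hle Hf2).
by rewrite ltxx.
Qed.

Lemma bounded_above (N : nat) (A : 'M[int]_N) (u : (nat -> 'I_N) -> int) (hu : contXA A u) : exists B : int, forall x, inXA A x -> u x <= B.
Proof.
apply: NNPP => Hn.
have P0 : forall B, exists y, inXA A y /\ B < u y.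
  move=> B; apply: NNPP => HB; apply: Hn; exists B => x Hx.
  rewrite leNgt; apply/negP => Hl; apply: HB; by exists x.
have [y0 [Hy0 _]] := P0 0.
have Hg : forall k w, exists a, P A u k w -> P A u k.+1 (setw w k a).
  move=> k w; case: (classic (P A u k w)) => H.
    have [a Ha] := @Pstep N A u k w H; by exists a.
  by exists (y0 0%N).
pose g k w := proj1_sig (constructive_indefinite_description _ (Hg k w)).
have gP : forall k w, P A u k w -> P A u k.+1 (setw w k (g k w)).
  move=> k w; exact: (proj2_sig (constructive_indefinite_description _ (Hg k w))).
pose fix W k := if k is k'.+1 then setw (W k') k' (g k' (W k')) else y0.
have WP : forall k, P A u k (W k).
  elim=> [|k IH] /=; last exact: gP.
  move=> B; have [y [Hy Hl]] := P0 B; by exists y; split.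
have Wst : forall k i, (i < k)%N -> W k i = W i.+1 i.
  elim=> [|k IH] i //= Hi.
  move: Hi; rewrite ltnS leq_eqVlt => /orP [/eqP ->|Hi].
    by [].
  by rewrite /setw (ltn_eqF Hi) IH.
pose x i := W i.+1 i.
have Hx : inXA A x.
  move=> n; have [y [Hy [Hc _]]] := WP n.+2 0.
  rewrite /x -(Wst n.+2 n) //  -!Hc //.
have [k Hk] := hu _ Hx.
have [y [Hy [Hc Hl]]] := WP k (u x).
rewrite (Hk y Hy) ?ltxx // in Hl.
by move=> i Hi; rewrite Hc // /x Wst.
Qed.

Lemma inXA_iter (N : nat) (A : 'M[int]_N) x i : inXA A x -> inXA A (iter i (@shift N) x).
Proof. move=> Hx; elim: i => [|i IH] //= n; exact: IH. Qed.

Theorem lemma2p2 (N : nat) (A : 'M[int]_N)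
  (hN : (1 < N)%N) (h01 : zero_one_mx A) (hirr : irreducible_mx A)
  (hperm : ~~ is_perm_mx A)
  (c : (nat -> 'I_N) -> int) (hc : contXA A c) (hunit : order_unit A c) :
  forall m : nat, exists nm : nat, forall x, inXA A x -> m%:Z <= bsum c nm x.
Proof.
move=> m.
have [n [g [hg [g0 [u [hu hcoh]]]]]] := (proj2 hunit) (fun _ => 1) (fun x _ => ex_intro _ 0%N (fun _ _ _ => erefl)).
have [B1 HB1] := bounded_above hu.
have hu' : contXA A (fun x => - u x).
  move=> x Hx; have [k Hk] := hu x Hx; exists k => y Hy Hi; by rewrite Hk.
have [B2 HB2] := bounded_above hu'.
have key : forall k x, inXA A x ->
   bsum c k x *+ n - k%:R - bsum g k x = u x - u (iter k (@shift N) x).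
  move=> k x Hx; elim: k => [|k IH].
    by rewrite /bsum !big_ord0 /= mul0rn !subrr.
  have := hcoh _ (inXA_iter k Hx).
  rewrite /bsum !big_ord_recr /= -/(bsum c k x) -/(bsum g k x) mulrnDl => H.
  rewrite -/(shift _) in H.
  move: IH H. set a := bsum c k x *+ n. set b := c (iter k (@shift N) x) *+ n.
  set gg := bsum g k x. set g1 := g _. set u0 := u x. set u1 := u (iter k _ _). set u2 := u _.
  move: a b gg g1 u0 u1 u2 => a b gg g1 u0 u1 u2 IH H.
  rewrite -natr1. lia.
exists (n * m + `|B1|%N + `|B2|%N).+1%N => x Hx.
have := key (n * m + `|B1|%N + `|B2|%N).+1%N x Hx.
have Hg : 0 <= bsum g (n * m + `|B1|%N + `|B2|%N).+1%N x.
  apply: sumr_ge0 => i _; apply: g0; exact: inXA_iter.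
have H1 := HB1 _ (inXA_iter (n * m + `|B1|%N + `|B2|%N).+1%N Hx).
have H2 := HB2 _ Hx.
have HB1' : B1 <= (`|B1|%N)%:R by rewrite natr_absz; lia.
have HB2' : B2 <= (`|B2|%N)%:R by rewrite natr_absz; lia.
move: Hg H1 H2 HB1' HB2'.
set S := bsum c _ x; set G := bsum g _ x; set U := u (iter _ _ x).
rewrite -[S *+ n]mulr_natr.
move: S G U => S G U.
nia.
Qed.
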